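(* Let $\mathbf{C}$ be an adhesive category. Consider a commutative diagram consisting of two vertically stacked squares: square (3) with morphisms $z:Z'\to Z$, $w:Z\to Y$, $w':Z'\to Y'$, $y:Y'\to Y$ satisfying $w\circ z=y\circ w'$, and square (4) with morphisms $y:Y'\to Y$, $v:Y\to X$, $v':Y'\to X'$, $x:X'\to X$ satisfying $v\circ y=x\circ v'$. Suppose that $z,w,w',y,v',x$ are monomorphisms, that $v\circ w$ is a monomorphism, that square (3) is a pushout (i.e. $(Y,w,y)$ is a pushout of $Z\xleftarrow{z}Z'\xrightarrow{w'}Y'$), and that the composite square (3)+(4) is an FPC, i.e. $(x,\ v'\circ w')$ is an FPC of $(v\circ w,\ z)$. Then square (4) is an FPC, i.e. $(x,v')$ is an FPC of $(v,y)$, and $v$ is a monomorphism.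
   Context: A category is adhesive if it has pushouts along monomorphisms, has pullbacks, and pushouts along monomorphisms are van Kampen squares. Final pullback complement (FPC): given morphisms $a:A\to B$ and $c:B\to C$, a pair $(d:D\to C,\ b:A\to D)$ is an FPC of $(c,a)$ if $c\circ a=d\circ b$, this square is a pullback (i.e. $(A,a,b)$ is a pullback of $(c,d)$), and for all morphisms $x_0:E\to B$, $y_0:E\to F$, $z_0:F\to C$, $w_0:E\to A$ such that $(E,x_0,y_0)$ is a pullback of $(c,z_0)$ and $a\circ w_0=x_0$, there exists a unique $w^*:F\to D$ with $d\circ w^*=z_0$ and $w^*\circ y_0=b\circ w_0$. *)

(* Defs.v *)
(* Hom-sets are types with Leibniz
   equality of morphisms. *)

Set Implicit Arguments.
Unset Strict Implicit.

Record Category := {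
  Ob :> Type;
  Hom : Ob -> Ob -> Type;
  comp : forall {a b c : Ob}, Hom b c -> Hom a b -> Hom a c;
  idm : forall a : Ob, Hom a a;
  comp_assoc : forall (a b c d : Ob) (f : Hom c d) (g : Hom b c) (h : Hom a b),
      comp f (comp g h) = comp (comp f g) h;
  comp_id_l : forall (a b : Ob) (f : Hom a b), comp (idm b) f = f;
  comp_id_r : forall (a b : Ob) (f : Hom a b), comp f (idm a) = f
}.

Arguments Hom {C} : rename.
Arguments comp {C a b c} : rename.
Arguments idm {C} : rename.

Notation "g ∘ f" := (comp g f) (at level 40, left associativity).

Section Defs.
Context {C : Category}.

Definition mono {A B : C} (f : Hom A B) : Prop :=
  forall (Z : C) (g h : Hom Z A), f ∘ g = f ∘ h -> g = h.

Definition is_pullback {B Cc D : C} (f : Hom B D) (g : Hom Cc D)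
    {P : C} (p1 : Hom P B) (p2 : Hom P Cc) : Prop :=
  f ∘ p1 = g ∘ p2 /\
  forall (Q : C) (q1 : Hom Q B) (q2 : Hom Q Cc), f ∘ q1 = g ∘ q2 ->
    exists u : Hom Q P, (p1 ∘ u = q1 /\ p2 ∘ u = q2) /\
      forall u' : Hom Q P, p1 ∘ u' = q1 /\ p2 ∘ u' = q2 -> u' = u.

Definition is_pushout {A B Cc : C} (f : Hom A B) (g : Hom A Cc)
    {P : C} (i1 : Hom B P) (i2 : Hom Cc P) : Prop :=
  i1 ∘ f = i2 ∘ g /\
  forall (Q : C) (q1 : Hom B Q) (q2 : Hom Cc Q), q1 ∘ f = q2 ∘ g ->
    exists u : Hom P Q, (u ∘ i1 = q1 /\ u ∘ i2 = q2) /\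
      forall u' : Hom P Q, u' ∘ i1 = q1 /\ u' ∘ i2 = q2 -> u' = u.

Definition van_Kampen {A B Cc D : C} (m : Hom A B) (f : Hom A Cc)
    (g : Hom B D) (n : Hom Cc D) : Prop :=
  forall (A' B' C' D' : C)
    (m' : Hom A' B') (f' : Hom A' C') (g' : Hom B' D') (n' : Hom C' D')
    (a : Hom A' A) (b : Hom B' B) (c : Hom C' Cc) (d : Hom D' D),
    g' ∘ m' = n' ∘ f' ->
    m ∘ a = b ∘ m' -> f ∘ a = c ∘ f' ->
    g ∘ b = d ∘ g' -> n ∘ c = d ∘ n' ->
    is_pullback m b a m' -> is_pullback f c a f' ->
    (is_pushout m' f' g' n' <->
       (is_pullback g d b g' /\ is_pullback n d c n')).

Definition has_pullbacks : Prop :=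
  forall (B Cc D : C) (f : Hom B D) (g : Hom Cc D),
    exists (P : C) (p1 : Hom P B) (p2 : Hom P Cc), is_pullback f g p1 p2.

Definition has_pushouts_along_monos : Prop :=
  forall (A B Cc : C) (m : Hom A B) (f : Hom A Cc), mono m ->
    exists (P : C) (i1 : Hom B P) (i2 : Hom Cc P), is_pushout m f i1 i2.

Definition pushouts_along_monos_are_vK : Prop :=
  forall (A B Cc D : C) (m : Hom A B) (f : Hom A Cc) (g : Hom B D) (n : Hom Cc D),
    mono m -> is_pushout m f g n -> van_Kampen m f g n.

Definition FPC {A B Cc D : C} (c : Hom B Cc) (a : Hom A B)
    (d : Hom D Cc) (b : Hom A D) : Prop :=
  c ∘ a = d ∘ b /\
  is_pullback c d a b /\
  forall (E F : C) (x0 : Hom E B) (y0 : Hom E F) (z0 : Hom F Cc) (w0 : Hom E A),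
    is_pullback c z0 x0 y0 -> a ∘ w0 = x0 ->
    exists w : Hom F D, (d ∘ w = z0 /\ w ∘ y0 = b ∘ w0) /\
      forall w' : Hom F D, d ∘ w' = z0 /\ w' ∘ y0 = b ∘ w0 -> w' = w.

End Defs.

Definition adhesive (C : Category) : Prop :=
  @has_pushouts_along_monos C /\ @has_pullbacks C /\
  @pushouts_along_monos_are_vK C.

(* Main.v *)
Require Import Defs.
From Stdlib Require Import Setoid.

Lemma pb_uniq {C : Category} {B Cc D P Q : C} {f : Hom B D} {g : Hom Cc D}
  {p1 : Hom P B} {p2 : Hom P Cc} {u1 u2 : Hom Q P} :
  is_pullback f g p1 p2 -> p1 ∘ u1 = p1 ∘ u2 -> p2 ∘ u1 = p2 ∘ u2 -> u1 = u2.
Proof.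
  intros [Hc Hu] E1 E2.
  destruct (Hu Q (p1 ∘ u1) (p2 ∘ u1)) as [u [_ Hun]].
  { rewrite !comp_assoc, Hc; reflexivity. }
  rewrite (Hun u1) by auto. symmetry; apply Hun; split; symmetry; auto.
Qed.

Lemma po_uniq {C : Category} {A B Cc P Q : C} {f : Hom A B} {g : Hom A Cc}
  {i1 : Hom B P} {i2 : Hom Cc P} {u1 u2 : Hom P Q} :
  is_pushout f g i1 i2 -> u1 ∘ i1 = u2 ∘ i1 -> u1 ∘ i2 = u2 ∘ i2 -> u1 = u2.
Proof.
  intros [Hc Hu] E1 E2.
  destruct (Hu Q (u1 ∘ i1) (u1 ∘ i2)) as [u [_ Hun]].
  { rewrite <- !comp_assoc, Hc; reflexivity. }
  rewrite (Hun u1) by auto. symmetry; apply Hun; split; symmetry; auto.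
Qed.

Lemma decomp (C : Category) (HC : adhesive C) (Z' Z Y Y' : C)
  (z : Hom Z' Z) (w : Hom Z Y) (w' : Hom Z' Y') (y : Hom Y' Y)
  (mz : mono z) (po3 : is_pushout z w' w y) (T : C) (d : Hom T Y) :
  exists (B' C' A' : C) (b : Hom B' Z) (c : Hom C' Y') (g' : Hom B' T)
    (n' : Hom C' T) (m' : Hom A' B') (f' : Hom A' C'),
    w ∘ b = d ∘ g' /\ y ∘ c = d ∘ n' /\ is_pushout m' f' g' n'.
Proof.
  destruct HC as [_ [Hpb HvK]].
  destruct (Hpb _ _ _ w d) as [B' [b [g' PB]]].
  destruct (Hpb _ _ _ y d) as [C' [c [n' PC]]].
  destruct (Hpb _ _ _ z b) as [A' [a [m' PA]]].
  pose proof PB as [HB UB]. pose proof PC as [HCc UC]. pose proof PA as [HA UA].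
  pose proof po3 as [H3 _].
  destruct (UC A' (w' ∘ a) (g' ∘ m')) as [f' [[F1 F2] _]].
  { rewrite comp_assoc, <- H3, <- comp_assoc, HA, comp_assoc, HB, comp_assoc.
    reflexivity. }
  exists B', C', A', b, c, g', n', m', f'.
  split; [exact HB|]. split; [exact HCc|].
  assert (PF : is_pullback w' c a f').
  { split; [symmetry; exact F1|].
    intros Q q1 q2 Hq.
    destruct (UB Q (z ∘ q1) (n' ∘ q2)) as [r [[R1 R2] Ur]].
    { rewrite comp_assoc, H3, <- comp_assoc, Hq, comp_assoc, HCc, comp_assoc.
      reflexivity. }
    destruct (UA Q q1 r) as [u [[U1 U2] Uu]]; [exact (eq_sym R1)|].
    assert (E : f' ∘ u = q2).
    { apply (pb_uniq PC).
      - rewrite comp_assoc, F1, <- comp_assoc, U1; exact Hq.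
      - rewrite comp_assoc, F2, <- comp_assoc, U2; exact R2. }
    exists u. split; [split; assumption|].
    intros u' [V1 V2]. apply Uu. split; [exact V1|].
    apply (pb_uniq PB).
    - rewrite comp_assoc, <- HA, <- comp_assoc, V1, R1; reflexivity.
    - rewrite comp_assoc, <- F2, <- comp_assoc, V2, R2; reflexivity. }
  apply (HvK Z' Z Y' Y z w' w y mz po3 A' B' C' T m' f' g' n' a b c d);
    try assumption.
  - symmetry; exact F2.
  - symmetry; exact F1.
  - split; assumption.
Qed.

Lemma lext {C : Category} {A B D : C} {f : Hom B D} {g : Hom A B}
  {r : Hom A D} :
  f ∘ g = r -> forall (E : C) (s : Hom D E), s ∘ f ∘ g = s ∘ r.
Proof. intros H E s. rewrite <- comp_assoc, H. reflexivity. Qed.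

Ltac lnorm := repeat rewrite comp_assoc.
Ltac lrw H :=
  let H0 := fresh in pose proof H as H0; repeat rewrite comp_assoc in H0;
  lnorm;
  first [ rewrite H0
        | let H' := fresh in pose proof (lext H0) as H';
          repeat setoid_rewrite comp_assoc in H'; rewrite H'; clear H' ];
  clear H0; lnorm.
Ltac lrw' H := lrw (eq_sym H).

Theorem mainTheorem6 (C : Category) (HC : adhesive C)
    (Z' Z Y Y' X X' : C)
    (z : Hom Z' Z) (w : Hom Z Y) (w' : Hom Z' Y') (y : Hom Y' Y)
    (v : Hom Y X) (v' : Hom Y' X') (x : Hom X' X)
    (sq3 : w ∘ z = y ∘ w')
    (sq4 : v ∘ y = x ∘ v')
    (mz : mono z) (mw : mono w) (mw' : mono w') (my : mono y)
    (mv' : mono v') (mx : mono x) (mvw : mono (v ∘ w))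
    (po3 : is_pushout z w' w y)
    (fpc34 : FPC (v ∘ w) z x (v' ∘ w')) :
  FPC v y x v' /\ mono v.
Proof.
  destruct fpc34 as [Fc [PBf Ufpc]].
  assert (fac : forall S (b : Hom S Z) (q : Hom S X'), v ∘ w ∘ b = x ∘ q ->
            exists u, z ∘ u = b /\ v' ∘ w' ∘ u = q).
  { intros S b q H. destruct PBf as [_ U].
    destruct (U S b q H) as [u [[U1 U2] _]]. exists u; split; assumption. }
  assert (mv : mono v).
  { intros S g h Hg.
    destruct (decomp C HC Z' Z Y Y' z w w' y mz po3 S g)
      as (B1 & C1 & A1 & b1 & c1 & g1 & n1 & m1 & f1 & HB1 & HC1 & PO1).
    apply (po_uniq PO1).
    - destruct (decomp C HC Z' Z Y Y' z w w' y mz po3 B1 (h ∘ g1))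
        as (B2 & C2 & A2 & b2 & c2 & g2 & n2 & m2 & f2 & HB2 & HC2 & PO2).
      apply (po_uniq PO2).
      + assert (E : b1 ∘ g2 = b2).
        { apply mvw. lrw HB1. lrw Hg. lrw HB2. reflexivity. }
        lrw' HB1. lrw' HB2. rewrite <- E. lnorm. reflexivity.
      + destruct (fac C2 (b1 ∘ n2) (v' ∘ c2)) as [u [U1 U2]].
        { lrw HB1. lrw Hg. lrw' HC2. lrw sq4. reflexivity. }
        assert (E : w' ∘ u = c2).
        { apply mv'. lnorm. exact U2. }
        lrw' HB1. lrw' HC2. lrw' U1. lrw sq3. lrw E. reflexivity.
    - destruct (decomp C HC Z' Z Y Y' z w w' y mz po3 C1 (h ∘ n1))
        as (B2 & C2 & A2 & b2 & c2 & g2 & n2 & m2 & f2 & HB2 & HC2 & PO2).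
      apply (po_uniq PO2).
      + destruct (fac B2 b2 (v' ∘ c1 ∘ g2)) as [u [U1 U2]].
        { lrw HB2. lrw' Hg. lrw' HC1. lrw sq4. reflexivity. }
        assert (E : w' ∘ u = c1 ∘ g2).
        { apply mv'. lnorm. exact U2. }
        lrw' HC1. lrw' HB2. lrw' E. lrw' sq3. lrw U1. reflexivity.
      + assert (E : c1 ∘ n2 = c2).
        { apply mv'. apply mx. lrw' sq4. lrw HC1. lrw Hg. lrw' HC2.
          lrw sq4. reflexivity. }
        lrw' HC1. lrw' HC2. rewrite <- E. lnorm. reflexivity. }
  split; [split; [exact sq4 | split] | exact mv].
  - split; [exact sq4 |].
    intros Q q1 q2 Hq.
    destruct (decomp C HC Z' Z Y Y' z w w' y mz po3 Q q1)
      as (B1 & C1 & A1 & b1 & c1 & g1 & n1 & m1 & f1 & HB1 & HC1 & PO1).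
    destruct (fac B1 b1 (q2 ∘ g1)) as [uB [UB1 UB2]].
    { lrw HB1. lrw Hq. reflexivity. }
    pose proof PO1 as [HP UP].
    destruct (UP Y' (w' ∘ uB) c1) as [u [[U1 U2] _]].
    { apply my. lrw' sq3. lrw UB1. lrw HB1. lrw HP. lrw' HC1. reflexivity. }
    exists u. split; [split|].
    + apply (po_uniq PO1).
      * lrw U1. lrw' sq3. lrw UB1. exact HB1.
      * lrw U2. exact HC1.
    + apply (po_uniq PO1).
      * lrw U1. lnorm. exact UB2.
      * lrw U2. apply mx. lrw' sq4. lrw HC1. lrw Hq. reflexivity.
    + intros u' [A _]. apply my. rewrite A.
      symmetry. apply (po_uniq PO1).
      * lrw U1. lrw' sq3. lrw UB1. exact HB1.
      * lrw U2. exact HC1.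
  - intros E F x0 y0 z0 w0 PBE Hw0.
    destruct HC as [_ [Hpb _]].
    destruct (Hpb _ _ _ w x0) as [E2 [p [q PBp]]].
    pose proof PBp as [Hp Up]. pose proof PBE as [HE UE].
    destruct (fac E2 p (v' ∘ w0 ∘ q)) as [w0' [W1 W2]].
    { lrw Hp. lrw' Hw0. lrw sq4. reflexivity. }
    assert (PB2 : is_pullback (v ∘ w) z0 p (y0 ∘ q)).
    { split.
      - lrw Hp. lrw HE. reflexivity.
      - intros Q q1 q2 Hq.
        destruct (UE Q (w ∘ q1) q2) as [r [[R1 R2] Ur]].
        { lnorm. exact Hq. }
        destruct (Up Q q1 r) as [u [[U1 U2] Uu]].
        { symmetry. exact R1. }
        exists u. split; [split|].
        + exact U1.
        + lrw U2. exact R2.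
        + intros u' [A B]. apply Uu. split; [exact A|].
          apply Ur. split.
          * lrw' Hp. lrw A. reflexivity.
          * lnorm. exact B. }
    destruct (Ufpc E2 F p (y0 ∘ q) z0 w0' PB2 W1) as [ws [[S1 S2] _]].
    exists ws. split; [split|].
    + exact S1.
    + apply mx. lrw S1. lrw' HE. lrw' Hw0. lrw sq4. reflexivity.
    + intros ws' [A _]. apply mx. rewrite A, S1. reflexivity.
Qed.
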